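(* Let $f:X\to X$ be a continuous map on a metric space $(X,d)$, let $K\subset X$ be compact and $\alpha\ge0$. Then $h_{\mathrm{est},\mathrm{cov}}(\alpha,K)=h_{\mathrm{est}}(\alpha,K)$.
   Context: Let $K_k:=f^k(K)$ and $f_k:=f|_{K_k}:K_k\to K_{k+1}$; write $f_0^{i}=f_{i-1}\circ\cdots\circ f_0$ and $f_0^{-i}(A)$ for the preimage of a set $A$ under $f_0^i$. A sequence $\mathcal U_\infty=(\mathcal U_k)_{k\ge0}$, where $\mathcal U_k$ is an open cover of $K_k$ (relative topology), is called $(\alpha,K)$-admissible if there is $\varepsilon>0$ with Lebesgue number $L(\mathcal U_k)\ge\varepsilon e^{-\alpha k}$ for all $k$ (the Lebesgue number being the greatest $r>0$ such that every ball of radius $r$ in $K_k$ lies in an element of $\mathcal U_k$). Set $h(f;\mathcal U_\infty)=\limsup_{n\to\infty}\frac1n\log_2\mathcal N\big(\bigvee_{i=0}^n f_0^{-i}\mathcal U_i\big)$, where $\mathcal N$ is the minimal cardinality of a finite subcover and $\bigvee$ denotes the join (all intersections $U_0\cap\cdots\cap U_n$ with $U_i$ from the $i$-th cover). Then $h_{\mathrm{est},\mathrm{cov}}(\alpha,K):=\sup h(f;\mathcal U_\infty)$ over all $(\alpha,K)$-admissible $\mathcal U_\infty$. Estimation entropy: a set $S\subset K$ is $(T,\varepsilon,\alpha,K)$-spanning ($T\in\mathbb Z_{>0}$) if for each $x\in K$ there is $y\in S$ with $d(f^t(x),f^t(y))<\varepsilon e^{-\alpha t}$ for all $t\in\{0,\ldots,T\}$;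 with $s^*_{\mathrm{est}}(T,\varepsilon,\alpha,K)$ the minimal cardinality of such a set, $h_{\mathrm{est}}(\alpha,K)=\lim_{\varepsilon\downarrow0}\limsup_{T\to\infty}\frac1T\log_2 s^*_{\mathrm{est}}(T,\varepsilon,\alpha,K)$. (Equivalently via maximal $(T,\varepsilon,\alpha,K)$-separated sets: $E\subset K$ such that distinct $x,y\in E$ satisfy $d(f^t(x),f^t(y))\ge\varepsilon e^{-\alpha t}$ for some $t\in\{0,\ldots,T\}$.) *)

(* Defs.v *)
From Stdlib Require Import List.
From HB Require Import structures.
From mathcomp Require Import all_boot all_order all_algebra.
From mathcomp Require Import all_classical all_reals all_analysis.
Set Implicit Arguments. Unset Strict Implicit. Unset Printing Implicit Defensive.
Import Order.TTheory GRing.Theory Num.Theory.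
Local Open Scope classical_set_scope.
Local Open Scope ring_scope.

Section Defs.
Context {R : realType} {X : Type} (d : X -> X -> R).

Definition is_metric : Prop :=
  [/\ forall x y, 0 <= d x y,
      forall x y, d x y = 0 <-> x = y,
      forall x y, d x y = d y x &
      forall x y z, d x z <= d x y + d y z].

Definition mcontinuous (f : X -> X) : Prop :=
  forall x (e : R), 0 < e -> exists2 delta : R, 0 < delta &
    forall y, d x y < delta -> d (f x) (f y) < e.

Definition mopen (U : set X) : Prop :=
  forall x, U x -> exists2 r : R, 0 < r & forall y, d x y < r -> U y.

Definition mcompact (K : set X) : Prop :=
  forall (I : Type) (V : I -> set X), (forall i, mopen (V i)) ->
    K `<=` \bigcup_i V i ->
    exists s : seq I, K `<=` [set x | exists2 i, In i s & V i x].

Definition elog2 (x : \bar R) : \bar R :=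
  match x with
  | r%:E => if (0 < r)%R then ((ln r / ln 2)%R)%:E else -oo
  | +oo => +oo
  | -oo => -oo
  end%E.

Definition rate (T : nat) (x : \bar R) : \bar R := ((T%:R)^-1)%:E * elog2 x.

Variable f : X -> X.

Definition spanning (T : nat) (eps alpha : R) (K : set X) (S : seq X) : Prop :=
  (forall y, In y S -> K y) /\
  forall x, K x -> exists2 y, In y S &
    forall t : nat, (t <= T)%N ->
      d (iter t f x) (iter t f y) < eps * expR (- alpha * t%:R).

(* minimal cardinality of a (T,eps,alpha,K)-spanning set (+oo if none) *)
Definition s_est (T : nat) (eps alpha : R) (K : set X) : \bar R :=
  ereal_inf [set (size S)%:R%:E | S in spanning T eps alpha K].

Definition h_est_eps (eps alpha : R) (K : set X) : \bar R :=
  limn_esup (fun T : nat => rate T (s_est T eps alpha K)).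

Definition h_est (alpha : R) (K : set X) : \bar R :=
  lim ((fun eps : R => h_est_eps eps alpha K) @ 0^'+).

Definition Kk (K : set X) (k : nat) : set X := iter k f @` K.

Definition rel_open_cover (A : set X) (U : set (set X)) : Prop :=
  (forall W, U W -> exists2 V, mopen V & W = V `&` A) /\
  A `<=` \bigcup_(W in U) W.

Definition lebesgue_number (A : set X) (U : set (set X)) : \bar R :=
  ereal_sup [set r%:E | r in [set r : R | 0 < r /\
    forall x, A x -> exists2 W, U W & [set y | A y /\ d x y < r] `<=` W]].

Definition admissible (alpha : R) (K : set X) (U : nat -> set (set X)) : Prop :=
  (forall k, rel_open_cover (Kk K k) (U k)) /\
  exists2 eps : R, 0 < eps & forall k : nat,
    ((eps * expR (- alpha * k%:R))%:E <= lebesgue_number (Kk K k) (U k))%E.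

(* the join  \/_{i=0}^n f_0^{-i} U_i  (a cover of K) *)
Definition join_cover (K : set X) (U : nat -> set (set X)) (n : nat) : set (set X) :=
  [set W | exists g : nat -> set X, (forall i, (i <= n)%N -> U i (g i)) /\
     W = [set x | K x /\ forall i, (i <= n)%N -> g i (iter i f x)]].

(* minimal cardinality of a finite subcover of A (+oo if none) *)
Definition Ncov (A : set X) (U : set (set X)) : \bar R :=
  ereal_inf [set (size s)%:R%:E | s in [set s : seq (set X) |
     (forall W, In W s -> U W) /\ A `<=` [set x | exists2 W, In W s & W x]]].

Definition h_cov (K : set X) (U : nat -> set (set X)) : \bar R :=
  limn_esup (fun n : nat => rate n (Ncov K (join_cover K U n))).

Definition h_est_cov (alpha : R) (K : set X) : \bar R :=
  ereal_sup [set h_cov K U | U in admissible alpha K].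

End Defs.

(* Main.v *)
Require Import Defs.
From mathcomp Require Import all_boot all_order all_algebra.
From mathcomp Require Import all_classical all_reals all_analysis.
Import Order.TTheory GRing.Theory Num.Theory.
Local Open Scope classical_set_scope.
Local Open Scope ring_scope.

Section Helpers.
Variable R : realType.
Local Open Scope ereal_scope.

Lemma elog2_mono (x y : \bar R) : x <= y -> elog2 x <= elog2 y.
Proof.
case: x => [r||]; case: y => [s||] //=; rewrite ?leey ?leNye //.
rewrite lee_fin => rs.
  case: ifPn => r0; last by rewrite leNye.
  have s0 : (0 < s)%R by apply: (lt_le_trans r0).
  rewrite s0 lee_fin ler_pM2r ?invr_gt0 ?ln_gt0 ?ltr1n //.
by rewrite ler_ln ?posrE.
Qed.

Lemma rate_mono T (x y : \bar R) : x <= y -> rate T x <= rate T y.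
Proof.
move=> xy; rewrite /rate; apply: lee_wpmul2l; last exact: elog2_mono.
by rewrite lee_fin invr_ge0.
Qed.

Lemma limn_esup_mono (u v : nat -> \bar R) : (forall n, u n <= v n) ->
  limn_esup u <= limn_esup v.
Proof.
move=> uv; rewrite /limn_esup /limf_esup.
apply: le_ereal_inf_tmp => _ [V FV <-].
apply: (le_trans (ereal_inf_lbound _)); first by exists V.
apply: ge_ereal_sup => _ [n Vn <-].
by apply: (le_trans (uv n)); apply: ereal_sup_ubound; exists n.
Qed.

Section Main.
Variables (X : Type) (d : X -> X -> R) (hd : is_metric d) (f : X -> X)
  (K : set X) (alpha : R).

Lemma s_mono T (e1 e2 : R) : (e1 <= e2)%R ->
  s_est d f T e2 alpha K <= s_est d f T e1 alpha K.
Proof.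
move=> e12; apply: le_ereal_inf_tmp => _ [S [SK Scov] <-].
apply: ereal_inf_lbound; exists S => //; split => // x Kx.
have [y yS hy] := Scov x Kx; exists y => // t tT.
apply: (lt_le_trans (hy t tT)).
by rewrite ler_pM2r ?expR_gt0.
Qed.

Lemma heps_mono (a b : R) : (a <= b)%R ->
  h_est_eps d f b alpha K <= h_est_eps d f a alpha K.
Proof.
move=> ab; apply: limn_esup_mono => n; apply: rate_mono; exact: s_mono.
Qed.

Lemma heps_cvg : cvg ((fun e : R => h_est_eps d f e alpha K) @ 0^'+).
Proof.
apply: nonincreasing_at_right_is_cvge; near=> x => a b _ _ ab.
exact: heps_mono.
Unshelve. all: by end_near.
Qed.


Lemma L5 (U : nat -> set (set X)) (eps : R) :
  (forall k : nat, ((eps * expR (- alpha * k%:R))%:E <= lebesgue_number d (Kk f K k) (U k))%E) ->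
  forall e : R, (0 < e)%R -> (e < eps)%R ->
  h_cov f K U <= h_est_eps d f e alpha K.
Proof.
move=> hU e e0 eeps.
have [d0 deq dsym dtri] := hd.
have ex1 : forall y i, K y -> exists W, U i W /\
    [set z | Kk f K i z /\ (d (iter i f y) z < e * expR (- alpha * i%:R))%R] `<=` W.
  move=> y i Ky.
  have : ((e * expR (- alpha * i%:R))%:E < lebesgue_number d (Kk f K i) (U i))%E.
    apply: (lt_le_trans _ (hU i)); rewrite lte_fin.
    by rewrite ltr_pM2r ?expR_gt0.
  move=> /ereal_sup_gt [_ [r [r0 hr] <-]]; rewrite lte_fin => er.
  have [W UW hW] := hr (iter i f y) (ex_intro2 _ _ y Ky erefl).
  exists W; split => // z [Kz dz]; apply: hW; split => //.
  exact: lt_trans er.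
have ex2 : forall p : X * nat, exists W, K p.1 -> (U p.2 W /\
    [set z | Kk f K p.2 z /\ (d (iter p.2 f p.1) z < e * expR (- alpha * p.2%:R))%R] `<=` W).
  move=> [y i] /=; have [Ky|nKy] := pselect (K y).
    by have [W HW] := ex1 y i Ky; exists W.
  by exists set0.
have [G HG] := choice ex2.
apply: limn_esup_mono => n; apply: rate_mono.
apply: le_ereal_inf_tmp => _ [S [SK Scov] <-].
apply: ereal_inf_lbound => /=.
exists (map (fun y => [set x | K x /\ forall i, (i <= n)%N -> G (y, i) (iter i f x)]) S);
  last by rewrite size_map.
split.
- move=> W /List.in_map_iff [y [<- yS]].
  exists (fun i => G (y, i)); split => // i _.
  exact: (HG (y, i) (SK y yS)).1.
- move=> x Kx; have [y yS hy] := Scov x Kx.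
  exists [set x | K x /\ forall i, (i <= n)%N -> G (y, i) (iter i f x)].
    by apply: (List.in_map (fun y => [set x | K x /\ forall i, (i <= n)%N -> G (y, i) (iter i f x)])).
  split => // i ni.
  apply: (HG (y, i) (SK y yS)).2; split; first by exists x.
  by rewrite dsym; apply: hy.
Qed.


Lemma L4 (e : R) : (0 < e)%R -> h_est_eps d f e alpha K <= h_est_cov d f alpha K.
Proof.
move=> e0.
have [d0 deq dsym dtri] := hd.
pose r (k : nat) := (e / 2 * expR (- alpha * k%:R))%R.
have r0 k : (0 < r k)%R by rewrite /r mulr_gt0 ?expR_gt0 ?divr_gt0.
pose U (k : nat) := [set W | exists2 z, Kk f K k z &
   W = [set y | (d z y < r k)%R] `&` Kk f K k].
have admU : admissible d f alpha K U.
  split.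
  - move=> k; split.
    + move=> W [z _ ->]; exists [set y | (d z y < r k)%R] => //.
      move=> x /= dzx; exists (r k - d z x)%R; first by rewrite subr_gt0.
      move=> y dxy; apply: (le_lt_trans (dtri z x y)).
      by rewrite -ltrBrDl.
    + move=> x Kx; exists ([set y | (d x y < r k)%R] `&` Kk f K k).
        by exists x.
      by split => //=; rewrite (proj2 (deq x x) erefl).
  - exists (e / 2)%R; first by rewrite divr_gt0.
    move=> k; apply: ereal_sup_ubound; exists (r k) => //; split => // x Kx.
    exists ([set y | (d x y < r k)%R] `&` Kk f K k); first by exists x.
    by move=> y [Ky dy]; split.
apply: (@le_trans _ _ (h_cov f K U)); last first.
  by apply: ereal_sup_ubound; exists U.
apply: limn_esup_mono => n; apply: rate_mono.
apply: le_ereal_inf_tmp => _ [s [sU scov] <-].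
have [[x0 Kx0]|nK] := pselect (exists x0, K x0); last first.
  apply: (le_trans (ereal_inf_lbound _)).
    exists [::] => //; split => // x Kx; exfalso; apply: nK; by exists x.
  by rewrite lee_fin /= ler0n.
pose pick (W : set X) : X := match pselect (exists x, W x) with
  | left h => projT1 (cid h) | right _ => x0 end.
have pickP W : (exists x, W x) -> W (pick W).
  by move=> h; rewrite /pick; case: pselect => // h'; case: (cid h').
have WK W : List.In W s -> W `<=` K.
  by move=> /sU [g [_ ->]] x [].
apply: ereal_inf_lbound; exists (map pick s); last by rewrite size_map.
split.
- move=> y /List.in_map_iff [W [<- Ws]].
  rewrite /pick; case: pselect => [h|//]; apply: (WK W Ws).
  by case: (cid h).
- move=> x Kx; have [W Ws Wx] := scov x Kx.
  exists (pick W); first exact: List.in_map.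
  have Wy : W (pick W) by apply: pickP; exists x.
  move: Wx Wy; have [g [gU ->]] := sU W Ws.
  move=> [_ hx] [_ hy] t tn.
  have [z _ gt] := gU t tn.
  move: (hx t tn) (hy t tn); rewrite gt => -[zx _] [zy _].
  apply: (le_lt_trans (dtri _ z _)); rewrite dsym.
  have -> : (e * expR (- alpha * t%:R) = r t + r t)%R.
    by rewrite /r -mulrDl -splitr.
  exact: ltrD.
Qed.

End Main.
End Helpers.

Theorem mainTheorem2 (R : realType) (X : Type) (d : X -> X -> R)
  (hd : is_metric d) (f : X -> X) (hf : mcontinuous d f)
  (K : set X) (hK : mcompact d K) (alpha : R) (halpha : 0 <= alpha) :
  h_est_cov d f alpha K = h_est d f alpha K.
Proof.
apply/le_anti/andP; split.
- apply: ge_ereal_sup => _ [U [_ [eps eps0 hU]] <-].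
  rewrite /h_est; apply: lime_ge; first exact: heps_cvg.
  near=> e; apply: (@L5 _ _ _ hd _ _ _ _ _ hU).
  + by near: e; exact: nbhs_right_gt.
  + by near: e; exact: nbhs_right_lt.
- rewrite /h_est; apply: lime_le; first exact: heps_cvg.
  near=> e; apply: (@L4 _ _ _ hd).
  by near: e; exact: nbhs_right_gt.
Unshelve. all: by end_near.
Qed.
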